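(* Let $0<e\le1$. For all $\sigma,k\in\mathbb{R}^3$ with $|\sigma|=|k|=1$ and all $z\in\mathbb{R}^3$, $$\big|P_{\sigma',k'}(z)-P_{k,\sigma}(z)\big|\le 2\,\frac{1-e}{e}\,|z|,$$ where $k'=\frac{(1-e)k+(1+e)\sigma}{\sqrt{2(1+e^2)+2(1-e^2)k\cdot\sigma}}$ and $\sigma'=\frac{(1+e)k+(1-e)\sigma}{\sqrt{2(1+e^2)+2(1-e^2)k\cdot\sigma}}$.
   Context: For vectors $a,b\in\mathbb{R}^3$, $P_{a,b}$ denotes the linear map $P_{a,b}(x)=(a\cdot x)\,b+(b\cdot a)\,x-(b\cdot x)\,a$. *)

(* Defs.v *)
From Stdlib Require Import Reals.
Open Scope R_scope.

Record vec3 : Type := V3 { v1 : R ; v2 : R ; v3 : R }.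

Definition vadd (a b : vec3) : vec3 := V3 (v1 a + v1 b) (v2 a + v2 b) (v3 a + v3 b).
Definition vsub (a b : vec3) : vec3 := V3 (v1 a - v1 b) (v2 a - v2 b) (v3 a - v3 b).
Definition vscale (c : R) (a : vec3) : vec3 := V3 (c * v1 a) (c * v2 a) (c * v3 a).
Definition dot (a b : vec3) : R := v1 a * v1 b + v2 a * v2 b + v3 a * v3 b.
Definition vnorm (a : vec3) : R := sqrt (dot a a).

Definition P (a b x : vec3) : vec3 :=
  vsub (vadd (vscale (dot a x) b) (vscale (dot b a) x)) (vscale (dot b x) a).

Definition denom (e : R) (k sigma : vec3) : R :=
  sqrt (2 * (1 + e ^ 2) + 2 * (1 - e ^ 2) * dot k sigma).

Definition kprime (e : R) (k sigma : vec3) : vec3 :=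
  vscale (/ denom e k sigma) (vadd (vscale (1 - e) k) (vscale (1 + e) sigma)).

Definition sigmaprime (e : R) (k sigma : vec3) : vec3 :=
  vscale (/ denom e k sigma) (vadd (vscale (1 + e) k) (vscale (1 - e) sigma)).

(* Main.v *)
Require Import Defs.
From Stdlib Require Import Reals Lra Psatz.
Open Scope R_scope.

Definition wv (k s z : vec3) : vec3 := vsub (vscale (dot k z) s) (vscale (dot s z) k).

Lemma decomp (e d : R) (s k z : vec3) :
  vsub (P (vscale d (vadd (vscale (1 + e) k) (vscale (1 - e) s)))
          (vscale d (vadd (vscale (1 - e) k) (vscale (1 + e) s))) z) (P k s z)
  = vadd (vscale (4*e*d^2 - 1) (wv k s z))
         (vscale (d^2*((1-e^2)*(dot k k + dot s s) + 2*(1+e^2)*dot k s) - dot k s) z).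
Proof.
  destruct s as [s1 s2 s3], k as [k1 k2 k3], z as [z1 z2 z3]; unfold P, wv, vsub, vadd, vscale, dot; cbn; f_equal; ring.
Qed.

Lemma dot_decomp a b k s z :
  dot (vadd (vscale a (wv k s z)) (vscale b z)) (vadd (vscale a (wv k s z)) (vscale b z))
  = a^2 * dot (wv k s z) (wv k s z) + b^2 * dot z z.
Proof. destruct s as [s1 s2 s3], k as [k1 k2 k3], z as [z1 z2 z3]; unfold wv, vsub, vadd, vscale, dot; simpl; ring. Qed.

Lemma lagrange k s z :
  dot (wv k s z) (wv k s z) =
  (dot k k * dot s s - (dot k s)^2) * dot z z -
  ((v2 k * v3 s - v3 k * v2 s) * v1 z + (v3 k * v1 s - v1 k * v3 s) * v2 z
   + (v1 k * v2 s - v2 k * v1 s) * v3 z)^2.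
Proof. destruct s as [s1 s2 s3], k as [k1 k2 k3], z as [z1 z2 z3]; unfold wv, vsub, vadd, vscale, dot; simpl; ring. Qed.

Lemma dot_nonneg a : 0 <= dot a a.
Proof. destruct a; unfold dot; simpl; nra. Qed.

Lemma unit_dot a : vnorm a = 1 -> dot a a = 1.
Proof.
  unfold vnorm; intro h. rewrite <- (sqrt_sqrt (dot a a)) by apply dot_nonneg.
  rewrite h; ring.
Qed.

Theorem lemma2p5 (e : R) (he0 : 0 < e) (he1 : e <= 1)
  (sigma k z : vec3) (hs : vnorm sigma = 1) (hk : vnorm k = 1) :
  vnorm (vsub (P (sigmaprime e k sigma) (kprime e k sigma) z) (P k sigma z))
    <= 2 * ((1 - e) / e) * vnorm z.
Proof.
  apply unit_dot in hs; apply unit_dot in hk.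
  set (c := dot k sigma).
  assert (hc1 : 1 - c >= 0).
  { assert (h := dot_nonneg (vsub k sigma)).
    replace (dot (vsub k sigma) (vsub k sigma)) with (dot k k + dot sigma sigma - 2 * c) in h
      by (unfold c; destruct k, sigma; unfold dot, vsub; simpl; ring). lra. }
  assert (hc2 : 1 + c >= 0).
  { assert (h := dot_nonneg (vadd k sigma)).
    replace (dot (vadd k sigma) (vadd k sigma)) with (dot k k + dot sigma sigma + 2 * c) in h
      by (unfold c; destruct k, sigma; unfold dot, vadd; simpl; ring). lra. }
  set (D2 := 2 * (1 + e ^ 2) + 2 * (1 - e ^ 2) * c).
  assert (hD2 : e^2*(1-c^2) <= D2).
  { unfold D2.
    assert (0 <= (1+c)*(1-e^2)) by (apply Rmult_le_pos; nra).
    assert (0 <= (1-c)*e^2) by (apply Rmult_le_pos; nra).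
    assert (0 <= e^2*(1+c)^2) by (apply Rmult_le_pos; nra).
    nra. }
  assert (hD2p : 0 < D2).
  { unfold D2. assert (0 <= (1+c)*(1-e^2)) by (apply Rmult_le_pos; nra). nra. }
  unfold sigmaprime, kprime. rewrite decomp, hk, hs.
  set (d := / denom e k sigma).
  assert (hq : d^2 * D2 = 1).
  { unfold d, denom. fold c. fold D2.
    rewrite pow_inv, <- Rsqr_pow2, Rsqr_sqrt by lra. field; lra. }
  unfold vnorm. rewrite dot_decomp, lagrange, hk, hs. fold c.
  set (t := (_ * v1 z + _ * v2 z + _ * v3 z)).
  set (zz := dot z z).
  assert (hzz : 0 <= zz) by apply dot_nonneg.
  set (M := 2 * ((1 - e) / e)).
  assert (hM : 0 <= M) by (unfold M; apply Rmult_le_pos; [lra| unfold Rdiv; apply Rmult_le_pos; [lra | left; apply Rinv_0_lt_compat; lra]]).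
  replace (M * sqrt zz) with (sqrt (M^2 * zz))
    by (rewrite sqrt_mult by nra; rewrite <- Rsqr_pow2, sqrt_Rsqr by lra; ring).
  apply sqrt_le_1_alt.
  set (q := d^2) in *.
  assert (hq0 : 0 < q) by nra.
  assert (ha : 4*e*q - 1 = q * (4*e - D2)) by (rewrite <- hq; ring).
  assert (hb : q*((1-e^2)*(1+1) + 2*(1+e^2)*c) - c = q * (2*(1-e^2)*(1-c^2))).
  { replace (q*((1-e^2)*(1+1) + 2*(1+e^2)*c) - c) with (q*((1-e^2)*(1+1) + 2*(1+e^2)*c) - c*(q*D2)) by (rewrite hq; ring).
    unfold D2; ring. }
  rewrite ha, hb.
  assert (key : (q * (4 * e - D2)) ^ 2 * (1 - c^2) + (q * (2 * (1 - e ^ 2) * (1 - c ^ 2))) ^ 2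
                = 4*(1-e)^2*(1-c^2)*q).
  { replace (4*(1-e)^2*(1-c^2)*q) with (4*(1-e)^2*(1-c^2)*q*(q*D2)) by (rewrite hq; ring).
    unfold D2; ring. }
  assert (hMe : M^2 = 4*(1-e)^2/e^2) by (unfold M; field; lra).
  assert (h1 : 4*(1-e)^2*(1-c^2)*q <= M^2).
  { rewrite hMe. apply (Rmult_le_reg_r (e^2)); [nra|].
    replace (4 * (1 - e) ^ 2 / e ^ 2 * e ^ 2) with (4*(1-e)^2*(q*D2)) by (rewrite hq; field; lra).
    assert (0 <= 4*(1-e)^2*q) by nra. nra. }
  assert (ht : 0 <= t^2) by nra.
  assert (hcc : 0 <= 1 - c^2) by nra.
  assert (hA : 0 <= (q * (4 * e - D2)) ^ 2) by apply pow2_ge_0.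
  replace (1 * 1 - c^2) with (1 - c^2) by ring.
  assert (E : (q * (4 * e - D2)) ^ 2 * ((1 - c ^ 2) * zz - t ^ 2) +
    (q * (2 * (1 - e ^ 2) * (1 - c ^ 2))) ^ 2 * zz
    = 4*(1-e)^2*(1-c^2)*q * zz - (q * (4 * e - D2)) ^ 2 * t^2) by (rewrite <- key; ring).
  rewrite E. nra.
Qed.
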